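(* For the uniform noising process on $[S]^d$ started from any $q_0$, and for every $i\in[d]$, $c\in[S]$, the function $\varphi_{i,c}(t)=\mathbb E_{x\sim q_t}[-\log s_t(x\oplus_ic,x)]$ is differentiable on $(0,\infty)$ and satisfies $$-\varphi_{i,c}'(t)\ge\varphi_{i,c}(t)\qquad\text{for all }t>0.$$ Consequently $\varphi(t)=\frac1S\sum_{i,c}\varphi_{i,c}(t)$ satisfies $-\varphi'(t)\ge\varphi(t)\ge0$, and $\varphi$ is non-increasing on $(0,\infty)$.
   Context: Uniform noising process: time-homogeneous CTMC on $[S]^d$ with rate $1/S$ between states at Hamming distance one and $0$ between states at Hamming distance $\ge2$; $q_t$ its time-$t$ law; $s_t(y,x)=q_t(y)/q_t(x)$. $x\oplus_i c$: $x$ with coordinate $i$ replaced by $(x^i+c)\bmod S$, convention $0\bmod S=S$. *)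

(* Defs.v *)
From HB Require Import structures.
From mathcomp Require Import all_boot all_order all_algebra.
From mathcomp Require Import all_classical all_reals all_analysis.
Set Implicit Arguments. Unset Strict Implicit. Unset Printing Implicit Defensive.
Import Order.TTheory GRing.Theory Num.Theory.
Local Open Scope ring_scope.

(* State space [S]^d.  A coordinate value v in {1,..,S} is represented by the
   ordinal v-1 : 'I_S. *)
Definition state (S d : nat) := {ffun 'I_d -> 'I_S}.

Lemma ord_pos (S : nat) (j : 'I_S) : (0 < S)%N.
Proof. exact: leq_ltn_trans (leq0n j) (ltn_ord j). Qed.

(* (v + c) mod S with convention 0 mod S = S, in the 0-based representation:
   if j = v-1 then the result (minus 1) is (j + c) %% S. *)
Definition shiftS (S c : nat) (j : 'I_S) : 'I_S :=
  Ordinal (ltn_pmod (j + c) (ord_pos j)).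

Definition oplus (S d : nat) (x : state S d) (i : 'I_d) (c : nat) : state S d :=
  [ffun k => if k == i then shiftS c (x k) else x k].

Definition hamming (S d : nat) (x y : state S d) : nat := #|[set k | x k != y k]|.

Definition urate (R : realType) (S d : nat) (x y : state S d) : R :=
  if hamming x y == 1%N then (S%:R)^-1 else 0.

Definition ugen (R : realType) (S d : nat) (x y : state S d) : R :=
  if x == y then - \sum_(z : state S d | z != x) urate R x z else urate R x y.

Definition genact (R : realType) (S d : nat) (p : state S d -> R) : state S d -> R :=
  fun y => \sum_(x : state S d) p x * ugen R x y.

(* time-t law q_t = q_0 e^{tQ}, via the exponential series, entrywise *)
Definition qt (R : realType) (S d : nat) (q0 : state S d -> R) (t : R)
  (x : state S d) : R :=
  limn (fun N : nat =>
    \sum_(0 <= n < N) (t ^+ n / (n`!)%:R * iter n (@genact R S d) q0 x)).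

Definition score (R : realType) (S d : nat) (q0 : state S d -> R) (t : R)
  (y x : state S d) : R := qt q0 t y / qt q0 t x.

Definition phi_ic (R : realType) (S d : nat) (q0 : state S d -> R)
  (i : 'I_d) (c : nat) (t : R) : R :=
  \sum_(x : state S d) qt q0 t x * (- ln (score q0 t (oplus x i c) x)).

Definition phi (R : realType) (S d : nat) (q0 : state S d -> R) (t : R) : R :=
  (S%:R)^-1 * \sum_(i < d) \sum_(1 <= c < S.+1) phi_ic q0 i c t.

(* Main.v *)
Require Import Defs.
From HB Require Import structures.
From mathcomp Require Import all_boot all_order all_algebra.
From mathcomp Require Import all_classical all_reals all_analysis.
From mathcomp Require Import ring lra.
Import Order.TTheory GRing.Theory Num.Theory.
Import numFieldNormedType.Exports.
Local Open Scope ring_scope.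
Set Implicit Arguments. Unset Strict Implicit. Unset Printing Implicit Defensive.

Section Comb.
Variables (R : realType) (S d : nat).
Hypothesis S0 : (0 < S)%N.
Local Notation st := (state S d).

Definition upd (x : st) (j : 'I_d) (a : 'I_S) : st :=
  [ffun k => if k == j then a else x k].
Definition Ej (j : 'I_d) (x y : st) : bool :=
  [forall k, (k != j) ==> (x k == y k)].

Lemma Ej_upd x j a z : (Ej j x z && (z j == a)) = (z == upd x j a).
Proof.
apply/andP/eqP => [[/forallP H /eqP za]|->].
  apply/ffunP => k; rewrite ffunE; case: eqP => [->//|/eqP kj].
  by move/implyP: (H k) => /(_ kj)/eqP.
split; last by rewrite ffunE eqxx.
by apply/forallP => k; rewrite ffunE; apply/implyP => /negbTE ->.
Qed.

Lemma Ej_sym j x y : Ej j x y = Ej j y x.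
Proof.
have E z w : Ej j z w -> Ej j w z.
  by move/forallP=> H; apply/forallP=> k; move: (H k); case: (k != j) => //=; rewrite eq_sym.
by apply/idP/idP; apply: E.
Qed.

Lemma Ej_refl j x : Ej j x x.
Proof. by apply/forallP => k; rewrite eqxx implybT. Qed.

Lemma sum_Ej (F : st -> R) x j :
  \sum_(z | Ej j x z) F z = \sum_(a : 'I_S) F (upd x j a).
Proof.
rewrite (partition_big (fun z : st => z j) xpredT) //=.
apply: eq_bigr => a _; rewrite (big_pred1 (upd x j a)) // => z.
by rewrite /= Ej_upd.
Qed.

Lemma S_neq0 : (S%:R : R) != 0.
Proof. by rewrite pnatr_eq0 -lt0n. Qed.

Lemma sum_upd (F : st -> R) j :
  \sum_(a : 'I_S) \sum_(x : st) F (upd x j a) = S%:R * \sum_x F x.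
Proof.
rewrite exchange_big /=.
under eq_bigr => x _ do rewrite -sum_Ej.
rewrite (exchange_big_dep xpredT) //= mulr_sumr; apply: eq_bigr => z _.
under eq_bigl => x do rewrite Ej_sym.
by rewrite sum_Ej sumr_const card_ord mulr_natl.
Qed.

Definition avg (j : 'I_d) (p : st -> R) (y : st) : R :=
  S%:R^-1 * \sum_(a : 'I_S) p (upd y j a).

Lemma upd_upd x j a b : upd (upd x j a) j b = upd x j b.
Proof. by apply/ffunP => k; rewrite !ffunE; case: eqP. Qed.

Lemma sum_avg (c p : st -> R) j : (forall x a, c (upd x j a) = c x) ->
  \sum_x c x * avg j p x = \sum_x c x * p x.
Proof.
move=> cinv.
under eq_bigr => x _ do rewrite /avg mulrCA mulr_sumr.
rewrite -mulr_sumr exchange_big /=.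
under eq_bigr => a _ do under eq_bigr => x _ do rewrite -(cinv x a).
rewrite (sum_upd (fun x => c x * p x)) mulrA mulVf ?mul1r //; exact: S_neq0.
Qed.

Lemma avg_upd j p x a : avg j p (upd x j a) = avg j p x.
Proof. by rewrite /avg; under eq_bigr do rewrite upd_upd. Qed.

Lemma urateE x y : urate R x y = S%:R^-1 * \sum_j ((Ej j x y && (x != y))%:R).
Proof.
rewrite /urate /hamming; set D := [set k | x k != y k].
have EjD j : Ej j x y = (D \subset [set j]).
  apply/idP/idP => [/forallP H|/fintype.subsetP H].
    apply/fintype.subsetP => k; rewrite !inE => xy; apply/negPn/negP => kj.
    by move/implyP: (H k) => /(_ kj); rewrite (negbTE xy).
  apply/forallP => k; apply/implyP => kj; apply/negPn/negP => xy.
  by move: (H k); rewrite !inE xy => /(_ isT) /eqP E; rewrite E eqxx in kj.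
have [exy|xy] := eqVneq x y.
  have -> : D = finset.set0 by apply/setP => k; rewrite !inE exy eqxx.
  rewrite exy ?eqxx cards0 /= big1 ?mulr0 // => j _; by case: (Ej _ _ _).
case: eqVneq => [/eqP/cards1P [j0 Dj0]|D1].
  rewrite (bigD1 j0) //= EjD Dj0 fintype.subxx /= big1 ?addr0 ?mulr1 // => j jj0.
  by rewrite EjD Dj0 finset.sub1set inE eq_sym (negbTE jj0).
rewrite big1 ?mulr0 // => j _; rewrite andbT EjD.
case: (boolP (D \subset [set j])) => // sub; exfalso.
have : D != finset.set0.
  apply/set0Pn; have [k xyk] : exists k, x k != y k.
    by apply/existsP; move: xy; apply: contraR => /existsPn H;
       apply/eqP/ffunP => k; move: (H k); rewrite negbK => /eqP.
  by exists k; rewrite inE.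
move/(subset_leq_card): sub; rewrite cards1 => le1.
move=> /set0Pn [k kD]; have: (0 < #|D|)%N by apply/card_gt0P; exists k.
by move: D1 le1; case: #|D| => [|[|]].
Qed.

Lemma ugenE x y : ugen R x y = \sum_(j < d) (S%:R^-1 * (Ej j x y)%:R - (x == y)%:R).
Proof.
rewrite /ugen; case: eqVneq => [<-|xy].
  under eq_bigr => z _ do rewrite urateE.
  rewrite -mulr_sumr exchange_big /= mulr_sumr -sumrN; apply: eq_bigr => j _.
  have -> : \sum_(z | z != x) ((Ej j x z && (x != z))%:R : R) = S%:R - 1.
    under eq_bigr => z zx do rewrite eq_sym zx andbT.
    have := bigD1 x (P := xpredT) (F := fun z => ((Ej j x z)%:R : R)) isT.
    rewrite Ej_refl /= => E.
    have : \sum_z ((Ej j x z)%:R : R) = S%:R.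
      rewrite (bigID (Ej j x)) /= [X in _ + X]big1 ?addr0; last by move=> z /negbTE ->.
      by under eq_bigr => z -> do []; rewrite sum_Ej sumr_const card_ord.
    by rewrite E => <-; rewrite addrC addKr.
  by rewrite Ej_refl mulr1n mulr1 mulrBr mulVf ?S_neq0 // mulr1 opprB.
rewrite urateE mulr_sumr; apply: eq_bigr => j _.
by rewrite xy andbT subr0.
Qed.

Lemma genactE (p : st -> R) y :
  genact p y = \sum_(j < d) (avg j p y - p y).
Proof.
rewrite /genact.
under eq_bigr => x _ do rewrite ugenE mulr_sumr.
rewrite exchange_big /=; apply: eq_bigr => j _.
under eq_bigr do rewrite mulrBr. rewrite sumrB; congr (_ - _).
  under eq_bigr => x _ do rewrite mulrCA.
  rewrite -mulr_sumr /avg; congr (_ * _).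
  rewrite (bigID (fun x => Ej j y x)) /= [X in _ + X]big1 ?addr0;
    last by move=> x; rewrite Ej_sym => /negbTE ->; rewrite mulr0.
  rewrite -sum_Ej; apply: eq_bigr => x; rewrite Ej_sym => ->; exact: mulr1.
rewrite (bigD1 y) //= eqxx mulr1 big1 ?addr0 // => x /negbTE ->; exact: mulr0.
Qed.

Lemma sum_avg1 (p : st -> R) j : \sum_x avg j p x = \sum_x p x.
Proof.
have E := @sum_avg (fun=> 1) p j (fun _ _ => erefl).
by under eq_bigr do rewrite -[avg _ _ _]mul1r; rewrite E; under eq_bigr do rewrite mul1r.
Qed.

Lemma sum_genact (p : st -> R) : \sum_y genact p y = 0.
Proof.
under eq_bigr do rewrite genactE.
rewrite exchange_big /= big1 // => j _; by rewrite sumrB sum_avg1 subrr.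
Qed.
End Comb.

Section Ser.
Variable R : realType.

Definition psum (a : nat -> R) (t : R) (N : nat) : R :=
  \sum_(0 <= n < N) (t ^+ n / (n`!)%:R * a n).
Definition ser (a : nat -> R) (t : R) : R := limn (fun N : nat => psum a t N).
Definition gbound (a : nat -> R) :=
  exists C L : R, 0 <= L /\ forall n, `|a n| <= C * L ^+ n.

Lemma pser_cvg (b : nat -> R) K : gbound b ->
  cvgn (pseries (fun n => b n / n`!%:R) K).
Proof.
case=> C [L [L0 Hb]]; apply: normed_cvg.
have LK0 : 0 <= L * `|K| by rewrite mulr_ge0.
apply: (series_le_cvg (v_ := fun n => `|C| * exp_coeff (L * `|K|) n)).
- by move=> n /=.
- by move=> n; rewrite mulr_ge0 // exp_coeff_ge0.
- move=> n /=.
  have Hf : `|(n`!%:R : R)| = n`!%:R by rewrite ger0_norm.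
  rewrite normrM normrM normfV normrX Hf /exp_coeff /= exprMn.
  have H2 : `|b n| <= `|C| * L ^+ n.
    by apply: (le_trans (Hb n)); rewrite ler_wpM2r ?exprn_ge0 // ler_norm.
  rewrite (_ : `|C| * _ = (`|C| * L ^+ n) * (n`!%:R)^-1 * `|K| ^+ n); last by ring.
  by rewrite ler_wpM2r ?exprn_ge0 // ler_wpM2r ?invr_ge0 ?ler0n.
- have := is_cvg_seriesZ (k := `|C|) (is_cvg_series_exp_coeff (L * `|K|)).
  by congr (cvgn _).
Qed.

Lemma psum_pseries a t :
  psum a t = pseries (fun n => a n / n`!%:R) t.
Proof.
apply/funext => N; rewrite /psum /pseries /series /=.
by apply: eq_bigr => n _; ring.
Qed.

Lemma psum_cvg a t : gbound a -> cvgn (psum a t).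
Proof. by move=> ga; rewrite psum_pseries; apply: pser_cvg. Qed.

Lemma gbound_shift a : gbound a -> gbound (fun n => a n.+1).
Proof.
case=> C [L [L0 H]]; exists (C * L), L; split => // n.
by rewrite -mulrA -exprS.
Qed.

Lemma pseries_diffs_fact a :
  pseries_diffs (fun n => a n / n`!%:R) = (fun n => a n.+1 / n`!%:R :> R).
Proof.
apply/funext => n; rewrite /pseries_diffs factS natrM invfM.
by rewrite mulrCA [X in _ * X]mulrA mulfV ?pnatr_eq0 // mul1r.
Qed.

Lemma ser_derive a (t : R) : gbound a ->
  is_derive t (1 : R) (ser a) (ser (fun n => a n.+1) t).
Proof.
move=> ga.
have -> : ser a = fun x => limn (pseries (fun n => a n / n`!%:R) x).
  by apply/funext => x; rewrite /ser psum_pseries.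
rewrite /ser psum_pseries -pseries_diffs_fact.
apply: (pseries_snd_diffs (K := `|t| + 1)).
- exact: pser_cvg.
- rewrite pseries_diffs_fact; apply: pser_cvg; exact: gbound_shift.
- rewrite !pseries_diffs_fact; apply: pser_cvg; exact: (gbound_shift (gbound_shift ga)).
- by rewrite [X in _ < X]ger0_norm ?ltrDl // addr_ge0.
Qed.

Lemma ser0 a : ser a 0 = a 0.
Proof.
rewrite /ser; apply: lim_near_cst => //. exists 1%N => // -[|N] //= _; rewrite /psum big_nat_recl //= expr0 divr1 mul1r.
by rewrite big1 ?addr0 // => i _; rewrite expr0n /= mul0r mul0r.
Qed.

Lemma lim_sum_seq (I : Type) (s : seq I) (f : I -> nat -> R) :
  (forall i, cvgn (f i)) ->
  cvgn (fun N => \sum_(i <- s) f i N) /\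
  limn (fun N => \sum_(i <- s) f i N) = \sum_(i <- s) limn (f i).
Proof.
move=> cf; elim: s => [|i s [IH1 IH2]].
  under eq_fun do rewrite big_nil.
  rewrite big_nil; split; [exact: is_cvg_cst | by rewrite lim_cst].
under eq_fun do rewrite big_cons.
rewrite big_cons -IH2; split; first exact: (is_cvgD (cf i) IH1).
exact: (limD (cf i) IH1).
Qed.

Lemma ser_sum (I : finType) (b : I -> nat -> R) t :
  (forall i, gbound (b i)) ->
  ser (fun n => \sum_(i : I) b i n) t = \sum_(i : I) ser (b i) t.
Proof.
move=> gb; rewrite /ser.
have -> : psum (fun n => \sum_i b i n) t = fun N => \sum_i psum (b i) t N.
  apply/funext => N; rewrite /psum.
  under eq_bigr do rewrite mulr_sumr.
  by rewrite exchange_big.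
by case: (lim_sum_seq (index_enum I) (fun i => psum_cvg (t := t) (gb i))).
Qed.

Lemma ser_scale k b t : gbound b -> ser (fun n => k * b n) t = k * ser b t.
Proof.
move=> gb; rewrite /ser.
have -> : psum (fun n => k * b n) t = k *: psum b t.
  apply/funext => N; rewrite fctE /psum scaler_sumr; apply: eq_bigr => n _.
  by rewrite /GRing.scale /= mulrCA.
by rewrite limZl_tmp //; apply: psum_cvg.
Qed.

End Ser.

Section Deriv.
Variable R : realType.

Lemma is_derive_comp1 (f g : R -> R) (x df dg : R) :
  is_derive x 1 f df -> is_derive (f x) 1 g dg -> is_derive x 1 (g \o f) (dg * df).
Proof.
move=> [Df DfE] [Dg DgE].
have Dc : derivable (g \o f) x 1.
  apply/derivable1_diffP; apply: differentiable_comp; exact/derivable1_diffP.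
by apply: DeriveDef Dc _; rewrite -derive1E derive1_comp // !derive1E DfE DgE.
Qed.

Lemma is_derive_bigsum (I : Type) (s : seq I) (f : I -> R -> R) (df : I -> R) (t : R) :
  (forall i, is_derive t 1 (f i) (df i)) ->
  is_derive t 1 (fun u => \sum_(i <- s) f i u) (\sum_(i <- s) df i).
Proof.
move=> H; elim: s => [|a s IH].
  have -> : (fun u => \sum_(i <- [::]) f i u) = cst 0.
    by apply/funext => u; rewrite big_nil.
  rewrite big_nil; exact: is_derive_cst.
have -> : (fun u => \sum_(i <- a :: s) f i u) = f a + (fun u => \sum_(i <- s) f i u).
  by apply/funext => u; rewrite big_cons.
rewrite big_cons; exact: is_deriveD.
Qed.

Lemma is_deriveV1 (f : R -> R) (x df : R) : f x != 0 ->
  is_derive x 1 f df -> is_derive x 1 (fun y => (f y)^-1) (- (f x) ^- 2 * df).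
Proof.
move=> fx0 [Df DfE]; apply: DeriveDef; first exact: derivableV.
by rewrite deriveV // DfE.
Qed.

Lemma is_deriveMul (f g : R -> R) (x df dg : R) :
  is_derive x 1 f df -> is_derive x 1 g dg ->
  is_derive x 1 (fun y => f y * g y) (f x * dg + g x * df).
Proof. by move=> Hf Hg; have := is_deriveM Hf Hg. Qed.

Lemma is_derive_cmul (k : R) (f : R -> R) (x df : R) :
  is_derive x 1 f df -> is_derive x 1 (fun y => k * f y) (k * df).
Proof.
move=> Hf; have := is_deriveMul (is_derive_cst k x 1) Hf.
by rewrite mulr0 addr0.
Qed.

End Deriv.

Section Ops.
Variables (R : realType) (S d : nat).
Hypothesis S0 : (0 < S)%N.
Local Notation st := (state S d).

Definition nrm (p : st -> R) := \sum_x `|p x|.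

Lemma nrm_ge0 p : 0 <= nrm p.
Proof. by apply: sumr_ge0 => x _. Qed.

Lemma le_nrm p x : `|p x| <= nrm p.
Proof.
rewrite /nrm (bigD1 x) //= lerDl; by apply: sumr_ge0 => y _.
Qed.

Definition mop (p : st -> R) (y : st) : R := \sum_(j < d) avg j p y.

Lemma avg_bound j p y : `|avg j p y| <= nrm p.
Proof.
rewrite /avg normrM ger0_norm ?invr_ge0 ?ler0n //.
rewrite ler_pdivrMl ?ltr0n //.
apply: (le_trans (ler_norm_sum _ _ _)).
apply: (le_trans (y := \sum_(a : 'I_S) nrm p)); first by apply: ler_sum => a _; apply: le_nrm.
by rewrite sumr_const card_ord mulr_natl.
Qed.

Lemma genact_bound p y : `|genact p y| <= (2 * d%:R) * nrm p.
Proof.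
rewrite (genactE S0) (le_trans (ler_norm_sum _ _ _)) //.
apply: (le_trans (y := \sum_(j < d) (2 * nrm p))).
  apply: ler_sum => j _; apply: (le_trans (ler_normB _ _)).
  by rewrite mulr2n mulrDl mul1r lerD ?avg_bound ?le_nrm.
rewrite sumr_const card_ord -mulr_natr le_eqVlt; apply/orP; left; apply/eqP; ring.
Qed.

Lemma mop_bound p y : `|mop p y| <= d%:R * nrm p.
Proof.
rewrite (le_trans (ler_norm_sum _ _ _)) //.
apply: (le_trans (y := \sum_(j < d) nrm p)); first by apply: ler_sum => j _; apply: avg_bound.
by rewrite sumr_const card_ord mulr_natl.
Qed.

Lemma iter_bound (F : (st -> R) -> st -> R) (K : R) :
  0 <= K -> (forall p y, `|F p y| <= K * nrm p) ->
  forall n p y, `|iter n F p y| <= nrm p * (#|st|%:R * K) ^+ n.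
Proof.
move=> K0 HF.
have HN p : nrm (F p) <= (#|st|%:R * K) * nrm p.
  apply: (le_trans (y := \sum_(y : st) K * nrm p)); first by apply: ler_sum => y _; apply: HF.
  by rewrite sumr_const -mulr_natr le_eqVlt; apply/orP; left; apply/eqP; ring.
have HI n p : nrm (iter n F p) <= nrm p * (#|st|%:R * K) ^+ n.
  elim: n => [|n IH] /=; first by rewrite expr0 mulr1.
  apply: (le_trans (HN _)); rewrite exprS mulrCA ler_wpM2l //.
  by rewrite mulr_ge0 // ler0n.
move=> n p y; exact: le_trans (le_nrm _ _) (HI n p).
Qed.

Lemma gbound_iter (F : (st -> R) -> st -> R) (K : R) p y :
  0 <= K -> (forall p y, `|F p y| <= K * nrm p) ->
  gbound (fun n => iter n F p y).
Proof.
move=> K0 HF; exists (nrm p), (#|st|%:R * K); split.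
  by rewrite mulr_ge0 // ler0n.
by move=> n; apply: iter_bound.
Qed.

Lemma gbound_genact p y : gbound (fun n => iter n (@genact R S d) p y).
Proof.
apply: (@gbound_iter _ (2 * d%:R)); first by rewrite mulr_ge0 // ler0n.
exact: genact_bound.
Qed.

Lemma gbound_mop p y : gbound (fun n => iter n mop p y).
Proof. apply: (@gbound_iter _ d%:R); [exact: ler0n | exact: mop_bound]. Qed.

Lemma qtE (q0 : st -> R) t y : qt q0 t y = ser (fun n => iter n (@genact R S d) q0 y) t.
Proof. by []. Qed.

Definition W (q0 : st -> R) (t : R) (y : st) : R := ser (fun n => iter n mop q0 y) t.

Lemma gbound_scale (k : R) b : gbound b -> gbound (fun n => k * b n).
Proof.
case=> C [L [L0 H]]; exists (`|k| * C), L; split => // n.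
by rewrite normrM -mulrA ler_wpM2l.
Qed.

Lemma gbound_lin (I : finType) (k : I -> R) (z : I -> st) F (K : R) p :
  0 <= K -> (forall p y, `|F p y| <= K * nrm p) ->
  gbound (fun n => \sum_(i : I) k i * iter n F p (z i)).
Proof.
move=> K0 HF; exists ((\sum_i `|k i|) * nrm p), (#|st|%:R * K); split.
  by rewrite mulr_ge0 // ler0n.
move=> n; apply: (le_trans (ler_norm_sum _ _ _)).
rewrite mulr_suml mulr_suml; apply: ler_sum => i _.
by rewrite normrM -mulrA ler_wpM2l // iter_bound.
Qed.

Lemma qt_genact (q0 : st -> R) (t : R) (y : st) :
  ser (fun n => iter n.+1 (@genact R S d) q0 y) t = genact (qt q0 t) y.
Proof.
have -> : (fun n => iter n.+1 (@genact R S d) q0 y) =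
    (fun n => \sum_x ugen R x y * iter n (@genact R S d) q0 x).
  apply/funext => n; rewrite iterS /genact; apply: eq_bigr => x _; exact: mulrC.
rewrite ser_sum; last by move=> x; apply: gbound_scale; apply: gbound_genact.
rewrite /genact; apply: eq_bigr => x _; rewrite ser_scale; last exact: gbound_genact.
exact: mulrC.
Qed.

Lemma qt_derive (q0 : st -> R) (t : R) (y : st) :
  is_derive t 1 (fun u => qt q0 u y) (genact (qt q0 t) y).
Proof.
rewrite -qt_genact; exact: (ser_derive t (gbound_genact q0 y)).
Qed.

Lemma W_mop (q0 : st -> R) (t : R) (y : st) :
  ser (fun n => iter n.+1 mop q0 y) t = mop (W q0 t) y.
Proof.
have -> : (fun n => iter n.+1 mop q0 y) =
    (fun n => \sum_(j < d) \sum_(a : 'I_S) S%:R^-1 * iter n mop q0 (upd y j a)).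
  by apply/funext => n; rewrite iterS /mop; apply: eq_bigr => j _; rewrite /avg mulr_sumr.
rewrite ser_sum; last first.
  move=> j; apply: (@gbound_lin _ (fun=> S%:R^-1) (fun a => upd y j a) _ d%:R).
    exact: ler0n.
  exact: mop_bound.
rewrite /mop; apply: eq_bigr => j _.
rewrite ser_sum; last by move=> a; apply: gbound_scale; apply: gbound_mop.
rewrite /avg mulr_sumr; apply: eq_bigr => a _; rewrite ser_scale //.
exact: gbound_mop.
Qed.

Lemma W_derive (q0 : st -> R) (t : R) (y : st) :
  is_derive t 1 (fun u => W q0 u y) (mop (W q0 t) y).
Proof.
rewrite -W_mop; exact: (ser_derive t (gbound_mop q0 y)).
Qed.

Lemma qt0 (q0 : st -> R) y : qt q0 0 y = q0 y.
Proof. by rewrite qtE ser0. Qed.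

Lemma W0 (q0 : st -> R) y : W q0 0 y = q0 y.
Proof. by rewrite /W ser0. Qed.

Lemma genact_mop (p : st -> R) y : genact p y = mop p y - d%:R * p y.
Proof.
by rewrite (genactE S0) sumrB sumr_const card_ord mulr_natl.
Qed.

Lemma mopZ (k : R) (p : st -> R) y : mop (fun x => k * p x) y = k * mop p y.
Proof.
rewrite /mop mulr_sumr; apply: eq_bigr => j _; rewrite /avg mulr_sumr mulr_sumr.
by rewrite mulr_sumr; apply: eq_bigr => a _; rewrite mulrCA.
Qed.

Lemma genactB (p p' : st -> R) y :
  genact (fun x => p x - p' x) y = genact p y - genact p' y.
Proof. by rewrite /genact -sumrB; apply: eq_bigr => x _; rewrite mulrBl. Qed.

End Ops.

Lemma nincr_of_deriv (R : realType) (f : R -> R) (a b : R) :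
  (forall x, a <= x <= b -> derivable f x 1) ->
  (forall x, a < x < b -> derive1 f x <= 0) -> a <= b -> f b <= f a.
Proof.
move=> df dn ab.
apply: (@ler0_derive1_nincr _ f a b) => //.
- by move=> x; rewrite in_itv /= => /andP[ax xb]; apply: df; rewrite !ltW.
- apply: derivable_within_continuous => x; rewrite in_itv /= => H; exact: df.
Qed.

Section Pos.
Variables (R : realType) (S d : nat).
Hypothesis S0 : (0 < S)%N.
Local Notation st := (state S d).
Variable q0 : st -> R.
Hypothesis q0_ge0 : forall x, 0 <= q0 x.
Hypothesis q0_sum : \sum_x q0 x = 1.

Lemma mop_ge0 (p : st -> R) : (forall x, 0 <= p x) -> forall y, 0 <= mop p y.
Proof.
move=> p0 y; apply: sumr_ge0 => j _; rewrite /avg mulr_ge0 ?invr_ge0 ?ler0n //.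
by apply: sumr_ge0.
Qed.

Lemma iter_mop_ge0 n y : 0 <= iter n (@mop R S d) q0 y.
Proof.
elim: n y => [|n IH] y /=; first exact: q0_ge0.
exact: mop_ge0.
Qed.

Definition agree (k : nat) (y z : st) : bool :=
  [forall j : 'I_d, (k <= j)%N ==> (y j == z j)].

Lemma agree_upd k (Hk : (k < d)%N) y a z :
  agree k (upd y (Ordinal Hk) a) z = agree k.+1 y z && (z (Ordinal Hk) == a).
Proof.
apply/idP/idP.
  move/forallP=> H; apply/andP; split.
    apply/forallP => j; apply/implyP => kj.
    have := H j; rewrite ffunE.
    have -> : (j == Ordinal Hk) = false.
      by apply/negbTE; apply/eqP => E; move: kj; rewrite E /= ltnn.
    by rewrite (ltnW kj).
  by have := H (Ordinal Hk); rewrite ffunE eqxx leqnn /= eq_sym.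
case/andP => /forallP H /eqP za; apply/forallP => j; apply/implyP => kj.
rewrite ffunE; have [E|jn] := eqVneq j (Ordinal Hk); first by rewrite E za.
have kj' : (k < j)%N.
  rewrite ltn_neqAle kj andbT; apply/eqP => E; move/eqP: jn; apply; apply/val_inj => /=.
  by rewrite E.
by move/implyP: (H j) => /(_ kj').
Qed.

Lemma iter_mop_lb k : (k <= d)%N -> forall y,
  S%:R^-1 ^+ k * \sum_(z | agree k y z) q0 z <= iter k (@mop R S d) q0 y.
Proof.
elim: k => [|k IH] Hk y.
  rewrite expr0 mul1r /= (big_pred1 y) // => z /=.
  apply/forallP/eqP => [H|<- j]; last by rewrite implyTb.
  by apply/ffunP => j; move/implyP: (H j) => /(_ isT) /eqP.
have Hk' : (k < d)%N by [].
set jk := Ordinal Hk'.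
rewrite iterS /mop (bigD1 jk) //=.
rewrite -[X in X <= _]addr0; apply: lerD; last first.
  by apply: sumr_ge0 => j _; rewrite /avg mulr_ge0 ?invr_ge0 ?ler0n //; apply: sumr_ge0 => a _; apply: iter_mop_ge0.
rewrite /avg exprS -mulrA ler_wpM2l ?invr_ge0 ?ler0n //.
apply: (le_trans _ (ler_sum _ (fun a _ => IH (ltnW Hk) (upd y jk a)))).
rewrite -mulr_sumr ler_wpM2l ?exprn_ge0 ?invr_ge0 ?ler0n //.
under [X in _ <= X]eq_bigr => a _ do under eq_bigl => z do rewrite agree_upd.
by rewrite (partition_big (fun z : st => z (Ordinal Hk')) xpredT).
Qed.

Lemma iter_mop_pos y : 0 < iter d (@mop R S d) q0 y.
Proof.
apply: (lt_le_trans _ (iter_mop_lb (leqnn d) y)).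
have -> : \sum_(z | agree d y z) q0 z = 1.
  rewrite -q0_sum; apply: eq_bigl => z; apply/forallP => j.
  by rewrite leqNgt ltn_ord.
by rewrite mulr1 exprn_gt0 // invr_gt0 ltr0n.
Qed.

Lemma W_pos t y : 0 < t -> 0 < W q0 t y.
Proof.
move=> t0; rewrite /W /ser.
set u := psum _ t.
have t0' : 0 <= t by rewrite ltW.
have term0 n : 0 <= t ^+ n / n`!%:R * iter n (@mop R S d) q0 y.
  by rewrite mulr_ge0 ?divr_ge0 ?exprn_ge0 ?ler0n // iter_mop_ge0.
have nd : nondecreasing_seq u.
  apply/nondecreasing_seqP => n; rewrite /u /psum big_nat_recr //=.
  by rewrite lerDl.
have cu : cvgn u by apply: psum_cvg; apply: gbound_mop.
apply: (lt_le_trans _ (nondecreasing_cvgn_le nd cu d.+1)).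
rewrite /u /psum big_nat_recr //=.
rewrite -[X in X < _]add0r; apply: ler_ltD; first by apply: sumr_ge0 => n _.
by rewrite mulr_gt0 ?divr_gt0 ?exprn_gt0 ?ltr0n ?fact_gt0 // iter_mop_pos.
Qed.

End Pos.

Lemma is_deriveSub (R : realType) (f g : R -> R) (x df dg : R) :
  is_derive x 1 f df -> is_derive x 1 g dg ->
  is_derive x 1 (fun y => f y - g y) (df - dg).
Proof. by move=> Hf Hg; have := is_deriveB Hf Hg. Qed.

Lemma expd_derive (R : realType) (k t : R) :
  is_derive t 1 (fun u => expR (k * u)) (expR (k * t) * k).
Proof.
have Hi : is_derive t 1 (fun u : R => k * u) (k * 1).
  exact: (is_derive_cmul k (is_derive_id t (1 : R))).
have := is_derive_comp1 Hi (is_derive_expR _); by rewrite mulr1.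
Qed.

Section Uniq.
Variables (R : realType) (S d : nat).
Hypothesis S0 : (0 < S)%N.
Local Notation st := (state S d).
Variable q0 : st -> R.
Hypothesis q0_ge0 : forall x, 0 <= q0 x.
Hypothesis q0_sum : \sum_x q0 x = 1.

Definition hh (t : R) (y : st) : R := expR (- d%:R * t) * W q0 t y.

Lemma hh_derive (t : R) (y : st) : is_derive t 1 (fun u => hh u y) (genact (hh t) y).
Proof.
have := is_deriveMul (expd_derive (- d%:R) t) (W_derive S0 q0 t y).
move=> H; apply: (is_derive_eq H).
rewrite (genact_mop S0) /hh (mopZ (expR (- d%:R * t)) (W q0 t)).
ring.
Qed.

Lemma dissip (u : st -> R) : \sum_y u y * genact u y <= 0.
Proof.
under eq_bigr do rewrite (genactE S0) mulr_sumr.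
rewrite exchange_big /=; apply: sumr_le0 => j _.
under eq_bigr do rewrite mulrBr.
rewrite sumrB subr_le0.
have H1 : \sum_y u y * avg j u y =
    S%:R^-1 * \sum_(a : 'I_S) \sum_y u y * u (upd y j a).
  rewrite exchange_big /= mulr_sumr; apply: eq_bigr => y _.
  by rewrite /avg mulrCA mulr_sumr.
have H2 : \sum_(a : 'I_S) \sum_y u y * u (upd y j a) <=
    \sum_(a : 'I_S) \sum_y (u y * u y + u (upd y j a) * u (upd y j a)) / 2.
  apply: ler_sum => a _; apply: ler_sum => y _.
  have := sqr_ge0 (u y - u (upd y j a)); nra.
have H3 : \sum_(a : 'I_S) \sum_y (u y * u y + u (upd y j a) * u (upd y j a)) / 2 =
    S%:R * \sum_y u y * u y.
  have HU := sum_upd (fun y => u y * u y) j.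
  under eq_bigr => a _ do rewrite -mulr_suml big_split /=.
  rewrite -mulr_suml big_split /= HU sumr_const card_ord -mulr_natl.
  have S2 : (2 : R) != 0 by rewrite pnatr_eq0.
  by field.
rewrite H1; apply: (le_trans (ler_wpM2l _ H2)); first by rewrite invr_ge0 ler0n.
by rewrite H3 mulrA mulVf ?mul1r // (S_neq0 R S0).
Qed.

Definition Df (u : R) (y : st) : R := qt q0 u y - hh u y.

Lemma Df_derive (t : R) (y : st) : is_derive t 1 (fun u => Df u y) (genact (Df t) y).
Proof.
have := is_deriveSub (qt_derive S0 q0 t y) (hh_derive t y).
by rewrite -genactB.
Qed.

Definition En (u : R) : R := \sum_y Df u y * Df u y.

Lemma En_derive (t : R) : is_derive t 1 En (2 * \sum_y Df t y * genact (Df t) y).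
Proof.
have := @is_derive_bigsum R st (index_enum st) (fun y u => Df u y * Df u y)
  (fun y => Df t y * genact (Df t) y + Df t y * genact (Df t) y) t
  (fun y => is_deriveMul (Df_derive t y) (Df_derive t y)).
move=> H; apply: (is_derive_eq H).
rewrite mulr_sumr; apply: eq_bigr => y _; ring.
Qed.

Lemma qt_hh (t : R) (y : st) : 0 <= t -> qt q0 t y = hh t y.
Proof.
move=> t0.
have E0 : En 0 = 0.
  rewrite /En big1 // => z _; rewrite /Df /hh qt0 W0 mulr0 expR0 mul1r subrr.
  by rewrite mulr0.
have Et : En t <= 0.
  rewrite -E0; apply: nincr_of_deriv => //.
    move=> x _; by have [] := En_derive x.
  move=> x _; rewrite derive1E; have [_ ->] := En_derive x.
  by rewrite pmulr_rle0 ?ltr0n // dissip.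
have Eq : En t = 0.
  apply/eqP; rewrite eq_le Et /=; apply: sumr_ge0 => z _; by rewrite -expr2 sqr_ge0.
have H0 : forall z, xpredT z -> 0 <= Df t z * Df t z by move=> z _; rewrite -expr2 sqr_ge0.
have := psumr_eq0P H0 Eq (i := y) isT.
move=> /eqP.
by rewrite mulf_eq0 orbb subr_eq0 => /eqP.
Qed.

Lemma qt_pos (t : R) (y : st) : 0 < t -> 0 < qt q0 t y.
Proof.
move=> t0; rewrite qt_hh ?ltW // /hh mulr_gt0 ?expR_gt0 //.
exact: (W_pos S0 q0_ge0 q0_sum).
Qed.

End Uniq.

Section Real.
Variable R : realType.

Lemma ln_le (y : R) : 0 < y -> ln y <= y - 1.
Proof.
move=> y0; have := @le_ln1Dx R (y - 1).
have -> : 1 + (y - 1) = y by ring.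
apply; lra.
Qed.

Lemma lnN_le (y : R) : 0 < y -> - ln y <= y^-1 - 1.
Proof.
by move=> y0; rewrite -lnV ?posrE // ln_le // invr_gt0.
Qed.

Lemma RL1 (P Rx a : R) : 0 < P -> 0 < Rx -> 0 < a ->
  P * - ln (Rx / P) + (a - P) <= (a - P) * ln (Rx / P) + P * (a - Rx) / Rx.
Proof.
move=> P0 R0 a0; set u := Rx / P.
have u0 : 0 < u by rewrite divr_gt0.
have H := lnN_le u0.
have Hu : u^-1 = P / Rx by rewrite /u invf_div.
rewrite -subr_ge0.
have -> : (a - P) * ln u + P * (a - Rx) / Rx - (P * - ln u + (a - P)) =
   a * (ln u + u^-1 - 1).
  rewrite Hu; field; by rewrite gt_eqF.
apply: mulr_ge0; [exact: ltW | lra].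
Qed.

Lemma RL2 (P Rx a b : R) : 0 < P -> 0 < Rx -> 0 < a -> 0 < b ->
  ln (a / b) * (P - a) - (a / b) * (Rx - b) <=
  (a - P) * ln (Rx / P) + P * (b - Rx) / Rx.
Proof.
move=> P0 R0 a0 b0.
set X := (Rx / P * (a / b))^-1.
have X0 : 0 < X by rewrite invr_gt0 !mulr_gt0 ?invr_gt0.
have lX : ln X = - (ln (Rx / P) + ln (a / b)).
  by rewrite /X lnV ?posrE ?mulr_gt0 ?invr_gt0 // lnM ?posrE ?mulr_gt0 ?invr_gt0.
have H1 := ln_le X0.
have H2 := lnN_le X0.
rewrite -subr_ge0.
have -> : (a - P) * ln (Rx / P) + P * (b - Rx) / Rx -
   (ln (a / b) * (P - a) - a / b * (Rx - b)) =
   P * (ln X + X^-1 - 1) + a * (X - 1 - ln X).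
  by rewrite lX /X invrK; field; rewrite !gt_eqF.
apply: addr_ge0; apply: mulr_ge0; (exact: ltW || lra).
Qed.

End Real.

Lemma is_deriveNeg (R : realType) (f : R -> R) (x df : R) :
  is_derive x 1 f df -> is_derive x 1 (fun y => - f y) (- df).
Proof. by move=> Hf; have := is_deriveN Hf. Qed.

Section Sigma.
Variables (R : realType) (S d : nat).
Local Notation st := (state S d).

Lemma shiftS_inj c : injective (@shiftS S c).
Proof.
move=> j j' /(congr1 val) /= /eqP; rewrite eqn_modDr !modn_small //.
by move/eqP => E; apply: val_inj.
Qed.

Lemma oplus_inj i c : injective (fun x : st => oplus x i c).
Proof.
move=> x y /= /ffunP H; apply/ffunP => k; have := H k; rewrite !ffunE.
by case: eqP => // _; apply: shiftS_inj.
Qed.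

Lemma sum_oplus (F : st -> R) i c : \sum_x F (oplus x i c) = \sum_x F x.
Proof. by rewrite [RHS](reindex_inj (@oplus_inj i c)). Qed.

Lemma upd_oplus_ne (x : st) i c j a : j != i ->
  upd (oplus x i c) j a = oplus (upd x j a) i c.
Proof.
move=> ji; apply/ffunP => k; rewrite !ffunE.
have [->|kj] := eqVneq k j; first by rewrite (negbTE ji).
by case: (k == i).
Qed.

Lemma upd_oplus_eq (x : st) i c a : upd (oplus x i c) i a = upd x i a.
Proof. by apply/ffunP => k; rewrite !ffunE; case: eqP. Qed.

Lemma oplus_upd_eq (x : st) i c a : oplus (upd x i a) i c = upd x i (shiftS c a).
Proof. by apply/ffunP => k; rewrite !ffunE; case: eqP => // ->; rewrite ffunE eqxx. Qed.

Lemma avg_oplus j (p : st -> R) x i c :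
  avg j p (oplus x i c) = avg j (fun z => p (oplus z i c)) x.
Proof.
rewrite /avg; congr (_ * _).
have [->|ji] := eqVneq j i.
  under eq_bigr do rewrite upd_oplus_eq.
  under [RHS]eq_bigr do rewrite oplus_upd_eq.
  by rewrite [LHS](reindex_inj (@shiftS_inj c)).
by apply: eq_bigr => a _; rewrite upd_oplus_ne.
Qed.

Lemma avg_oplus_i (p : st -> R) x i c :
  avg i (fun z => p (oplus z i c)) x = avg i p x.
Proof.
by rewrite -avg_oplus /avg; under eq_bigr do rewrite upd_oplus_eq.
Qed.

Lemma avg_pos (S0 : (0 < S)%N) j (p : st -> R) x :
  (forall z, 0 < p z) -> 0 < avg j p x.
Proof.
move=> p0; rewrite /avg mulr_gt0 ?invr_gt0 ?ltr0n //.
rewrite (bigD1 (Ordinal S0)) //=; apply: ltr_wpDr; last exact: p0.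
by apply: sumr_ge0 => a _; rewrite ltW.
Qed.

End Sigma.

Section Main.
Variables (R : realType) (S d : nat).
Hypothesis S0 : (0 < S)%N.
Local Notation st := (state S d).
Variable q0 : st -> R.
Hypothesis q0_ge0 : forall x, 0 <= q0 x.
Hypothesis q0_sum : \sum_x q0 x = 1.
Variables (i : 'I_d) (c : nat).

Local Notation sg x := (oplus x i c).

Lemma qpos (t : R) y : 0 < t -> 0 < qt q0 t y.
Proof. exact: (qt_pos S0 q0_ge0 q0_sum). Qed.

Definition Dsum (t : R) (x : st) : R :=
  genact (qt q0 t) x - qt q0 t x * genact (qt q0 t) (sg x) / qt q0 t (sg x)
  - genact (qt q0 t) x * ln (qt q0 t (sg x) / qt q0 t x).

Lemma summand_derive (t : R) (x : st) : 0 < t ->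
  is_derive t 1 (fun u => qt q0 u x * - ln (score q0 u (sg x) x)) (Dsum t x).
Proof.
move=> t0.
have Q0 := qpos x t0; have R0 := qpos (sg x) t0.
have hQ := qt_derive S0 q0 t x.
have hR := qt_derive S0 q0 t (sg x).
have hV := is_deriveV1 (lt0r_neq0 Q0) hQ.
have hG := is_deriveMul hR hV.
have g0 : 0 < qt q0 t (sg x) * (qt q0 t x)^-1 by rewrite mulr_gt0 ?invr_gt0.
have hL := is_derive_comp1 hG (is_derive1_ln g0).
have hN := is_deriveNeg hL.
have hM := is_deriveMul hQ hN.
apply: (is_derive_eq hM).
rewrite /Dsum /=; field.
by rewrite !gt_eqF.
Qed.

Lemma phi_ic_derive (t : R) : 0 < t ->
  is_derive t 1 (phi_ic q0 i c) (\sum_x Dsum t x).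
Proof.
move=> t0.
exact: (@is_derive_bigsum R st (index_enum st)
  (fun x u => qt q0 u x * - ln (score q0 u (sg x) x)) (Dsum t) t
  (fun x => summand_derive x t0)).
Qed.

End Main.

Section Ineq.
Variables (R : realType) (S d : nat).
Hypothesis S0 : (0 < S)%N.
Local Notation st := (state S d).
Variable q0 : st -> R.
Hypothesis q0_ge0 : forall x, 0 <= q0 x.
Hypothesis q0_sum : \sum_x q0 x = 1.
Variables (i : 'I_d) (c : nat).

Lemma fiber_zero (j : 'I_d) (w p : st -> R) :
  (forall x a, w (upd x j a) = w x) ->
  \sum_x w x * (p x - avg j p x) = 0.
Proof.
move=> wi; under eq_bigr do rewrite mulrBr.
by rewrite sumrB (sum_avg S0 p wi) subrr.
Qed.

Lemma phi_ic_ineq (t : R) : 0 < t ->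
  phi_ic q0 i c t <= - \sum_x Dsum q0 i c t x.
Proof.
move=> t0.
set p := qt q0 t.
set r := fun z => p (oplus z i c).
have p0 z : 0 < p z by apply: (qpos S0 q0_ge0 q0_sum).
have r0 z : 0 < r z by apply: p0.
pose a j x := avg j p x.
pose b j x := avg j r x.
have a0 j x : 0 < a j x by apply: avg_pos.
have b0 j x : 0 < b j x by apply: avg_pos.
pose L x := ln (r x / p x).
pose T j x := (a j x - p x) * L x + p x * (b j x - r x) / r x.
have E1 : - \sum_x Dsum q0 i c t x = \sum_x \sum_(j < d) T j x.
  have Ex x : - Dsum q0 i c t x = \sum_(j < d) T j x - genact p x.
    have HG : genact p x = \sum_(j < d) (a j x - p x) by rewrite (genactE S0).
    have HG' : genact p (oplus x i c) = \sum_(j < d) (b j x - r x).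
      by rewrite (genactE S0); apply: eq_bigr => j _; rewrite /b avg_oplus.
    have -> : \sum_(j < d) T j x = genact p x * L x + p x * genact p (oplus x i c) / r x.
      rewrite /T big_split /= -mulr_suml HG HG'; congr (_ + _).
      by rewrite -mulr_suml -mulr_sumr.
    rewrite /Dsum -/p /L /r; ring.
  rewrite -sumrN; under eq_bigr do rewrite Ex.
  by rewrite sumrB (sum_genact S0) subr0.
rewrite E1 exchange_big /= (bigD1 i) //=.
rewrite -[X in X <= _]addr0; apply: lerD.
  have -> : phi_ic q0 i c t = \sum_x (p x * - L x + (a i x - p x)).
    rewrite big_split /= sumrB (sum_avg1 S0) subrr addr0 //.
  apply: ler_sum => x _.
  have Eb : b i x = a i x by rewrite /b /a /r avg_oplus_i.
  by rewrite /T Eb /L; apply: RL1.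
apply: sumr_ge0 => j ji.
have Z : \sum_x (ln (a j x / b j x) * (p x - a j x) - (a j x / b j x) * (r x - b j x)) = 0.
  rewrite sumrB (fiber_zero p) ?(fiber_zero r) ?subrr // => x a';
  by rewrite /a /b !avg_upd.
suff Hle : \sum_x (ln (a j x / b j x) * (p x - a j x) - (a j x / b j x) * (r x - b j x)) <= \sum_x T j x.
  by rewrite Z in Hle.
apply: ler_sum => x _; rewrite /T /L; exact: RL2.
Qed.

Lemma phi_ic_ge0 (t : R) : 0 < t -> 0 <= phi_ic q0 i c t.
Proof.
move=> t0.
set p := qt q0 t.
have p0 z : 0 < p z by apply: (qpos S0 q0_ge0 q0_sum).
have Z : \sum_x (p x - p (oplus x i c)) = 0.
  by rewrite sumrB (sum_oplus (fun z => p z)) subrr.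
suff Hle : \sum_x (p x - p (oplus x i c)) <= phi_ic q0 i c t by rewrite Z in Hle.
apply: ler_sum => x _; rewrite /score -/p.
have u0 : 0 < p (oplus x i c) / p x by rewrite divr_gt0.
have H := ln_le u0.
have E : p x - p (oplus x i c) = p x * (1 - p (oplus x i c) / p x).
  by field; rewrite gt_eqF.
rewrite E; apply: ler_wpM2l; [exact: ltW | lra].
Qed.

End Ineq.

Unset Implicit Arguments. Set Strict Implicit. Set Printing Implicit Defensive.

Theorem mainTheorem17 (R : realType) (S d : nat) (q0 : state S d -> R) :
  (0 < S)%N ->
  (forall x, 0 <= q0 x) -> \sum_(x : state S d) q0 x = 1 ->
  (forall (i : 'I_d) (c : nat), (1 <= c <= S)%N ->
     forall t : R, 0 < t ->
       derivable (phi_ic q0 i c) t 1 /\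
       phi_ic q0 i c t <= - derive1 (phi_ic q0 i c) t) /\
  (forall t : R, 0 < t ->
     derivable (phi q0) t 1 /\
     phi q0 t <= - derive1 (phi q0) t /\ 0 <= phi q0 t) /\
  (forall s t : R, 0 < s -> s <= t -> phi q0 t <= phi q0 s).
Proof.
move=> S0 q0_ge0 q0_sum.
pose DP (t : R) := (S%:R)^-1 * \sum_(i < d) \sum_(1 <= c < S.+1)
   \sum_x Dsum q0 i c t x.
have phiD (t : R) : 0 < t -> is_derive t 1 (phi q0) (DP t).
  move=> t0; apply: is_derive_cmul.
  apply: (@is_derive_bigsum R 'I_d (index_enum 'I_d)
     (fun i u => \sum_(1 <= c < S.+1) phi_ic q0 i c u)) => i.
  apply: (@is_derive_bigsum R nat (index_iota 1 S.+1)
     (fun c u => phi_ic q0 i c u)) => c.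
  exact: (phi_ic_derive S0 q0_ge0 q0_sum i c t0).
have phi_le (t : R) : 0 < t -> phi q0 t <= - DP t.
  move=> t0; rewrite /DP /phi -mulrN; apply: ler_wpM2l; first by rewrite invr_ge0 ler0n.
  rewrite -sumrN; apply: ler_sum => i _; rewrite -sumrN; apply: ler_sum => c _.
  exact: (phi_ic_ineq S0 q0_ge0 q0_sum i c t0).
have phi_ge0 (t : R) : 0 < t -> 0 <= phi q0 t.
  move=> t0; rewrite /phi mulr_ge0 ?invr_ge0 ?ler0n //.
  apply: sumr_ge0 => i _; apply: sumr_ge0 => c _.
  exact: (phi_ic_ge0 S0 q0_ge0 q0_sum i c t0).
split.
  move=> i c _ t t0.
  have [Dv Dval] := phi_ic_derive S0 q0_ge0 q0_sum i c t0.
  split => //; rewrite derive1E Dval.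
  exact: (phi_ic_ineq S0 q0_ge0 q0_sum i c t0).
split.
  move=> t t0; have [Dv Dval] := phiD t t0.
  by rewrite derive1E Dval; split => //; split; [exact: phi_le | exact: phi_ge0].
move=> s t s0 st.
apply: nincr_of_deriv => //.
  move=> x /andP[sx _]; have [] := phiD x (lt_le_trans s0 sx) => //.
move=> x /andP[sx _]; have x0 : 0 < x by apply: lt_trans sx.
have [_ Dval] := phiD x x0; rewrite derive1E Dval.
have := phi_le x x0; have := phi_ge0 x x0; lra.
Qed.
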